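(* Let $\mathcal{H}$ be a real Hilbert space, let $A,B:\mathcal{H}\rightrightarrows\mathcal{H}$ be operators and let $\beta\in{]0,1[}$. Then \[ \operatorname{zer}\left(A^{(\beta)}+B^{(\beta)}\right)=\beta J_{\frac{1}{2(1-\beta)}(A+B)}(0). \] Consequently, $\operatorname{zer}\left(A^{(\beta)}+B^{(\beta)}\right)\neq\emptyset$ if and only if $0\in\operatorname{ran}\left(\operatorname{Id}+\frac{1}{2(1-\beta)}(A+B)\right)$.
   Context: The resolvent of an operator $T$ is $J_T:=(\operatorname{Id}+T)^{-1}$, i.e. $J_T(x)=\{y: x\in y+T(y)\}$ (a set). The $\beta$-strengthening of $A$ is $A^{(\beta)}(x):=\left(A+(1-\beta)\operatorname{Id}\right)\left(\frac{x}{\beta}\right)$. $\operatorname{zer}T=\{x:0\in T(x)\}$; $\operatorname{ran}$ denotes the range. *)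

(* Defs.v *)
From HB Require Import structures.
From mathcomp Require Import all_boot all_order all_algebra.
From mathcomp Require Import classical_sets reals.
Set Implicit Arguments. Unset Strict Implicit. Unset Printing Implicit Defensive.
Import GRing.Theory Num.Theory.
Local Open Scope ring_scope.
Local Open Scope classical_set_scope.

Definition op (H : Type) := H -> set H.

Section Ops.
Variables (R : realType) (H : lmodType R).

Definition opId : op H := fun x => [set x].
Definition opAdd (A B : op H) : op H :=
  fun x => [set z | exists a b, A x a /\ B x b /\ z = a + b].
Definition opScale (c : R) (T : op H) : op H :=
  fun x => [set z | exists t, T x t /\ z = c *: t].
Definition resolvent (T : op H) (x : H) : set H :=
  [set y | opAdd opId T y x].
Definition strengthening (beta : R) (A : op H) : op H :=
  fun x => opAdd A (opScale (1 - beta) opId) (beta^-1 *: x).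
Definition zer (T : op H) : set H := [set x | T x 0].
Definition ran (T : op H) : set H := [set y | exists x, T x y].
End Ops.

(* Main.v *)
Require Import Defs.
From HB Require Import structures.
From mathcomp Require Import all_boot all_order all_algebra.
From mathcomp Require Import classical_sets reals.
Import Order.TTheory GRing.Theory Num.Theory.
Local Open Scope ring_scope.
Local Open Scope classical_set_scope.

Theorem proposition3p4 (R : realType) (H : lmodType R) (A B : op H) (beta : R)
  (hb0 : 0 < beta) (hb1 : beta < 1) :
  zer (opAdd (strengthening beta A) (strengthening beta B)) =
    (fun y => beta *: y) @`
      resolvent (opScale (2 * (1 - beta))^-1 (opAdd A B)) 0
  /\
  (zer (opAdd (strengthening beta A) (strengthening beta B)) !=set0 <->
    ran (opAdd (@opId R H) (opScale (2 * (1 - beta))^-1 (opAdd A B))) 0).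
Proof.
have hb : beta != 0 by rewrite gt_eqF.
have hc1 : 1 - beta != 0 by rewrite subr_eq0 eq_sym lt_eqF.
have hc : 2 * (1 - beta) != 0 by rewrite mulf_neq0 // pnatr_eq0.
set c := 1 - beta.
have E : zer (opAdd (strengthening beta A) (strengthening beta B)) =
    (fun y => beta *: y) @`
      resolvent (opScale (2 * c)^-1 (opAdd A B)) 0.
  apply/seteqP; split => x /=.
  - move=> [p [q [[a [r [Ha [[t [Ht ->]] ->]]]] [[b [s [Hb [[u [Hu ->]] ->]]]] E0]]]].
    rewrite /opId /= in Ht Hu; subst t u.
    exists (beta^-1 *: x); last by rewrite scalerA divff // scale1r.
    exists (beta^-1 *: x), ((2 * c)^-1 *: (a + b)).
    split; first by [].
    split; first by exists (a + b); split => //; exists a, b.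
    have -> : a + b = - ((2 * c) *: (beta^-1 *: x)).
      apply/eqP; rewrite -subr_eq0 opprK; apply/eqP; rewrite [RHS]E0.
      rewrite -[2]/(1+1) mulrDl mul1r scalerDl !addrA; congr (_ + _).
      by rewrite -!addrA (addrC b).
    by rewrite scalerN scalerA mulVf // scale1r subrr.
  - move=> [y [u [v [Hu [[t [[a [b [Ha [Hb ->]]]] ->]] E0]]]] <-].
    rewrite /opId /= in Hu; subst u.
    rewrite /zer /=.
    have Hy : beta^-1 *: (beta *: y) = y by rewrite scalerA mulVf // scale1r.
    exists (a + c *: y), (b + c *: y).
    split; first by exists a, (c *: y); rewrite Hy; split => //; split => //; exists y.
    split; first by exists b, (c *: y); rewrite Hy; split => //; split => //; exists y.
    have : (2 * c) *: (y + (2 * c)^-1 *: (a + b)) = 0 by rewrite -E0 scaler0.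
    rewrite scalerDr scalerA divff // scale1r -[2]/(1+1) mulrDl mul1r scalerDl => <-.
    by rewrite [RHS]addrACA [RHS]addrC.
split; first by [].
rewrite E; split.
- move=> [x [y Hy _]]; by exists y.
- move=> [y Hy]; by exists (beta *: y), y.
Qed.
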